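(* Let $f = c_1 \wedge c_2 \wedge \cdots \wedge c_m$ ($m \ge 1$) be a Boolean formula in conjunctive normal form, where each clause is $c_i = L_{i1} \vee L_{i2} \vee \cdots \vee L_{i n_i}$ with $n_i \ge 1$ and each $L_{i\mu}$ a literal (a propositional variable or its negation). Introduce one new Boolean variable (an ''indicator'') $\xi_{i\mu}$ for each position $(i,\mu)$, $1 \le i \le m$, $1 \le \mu \le n_i$. Define $$g = \bigwedge_{i=1}^{m} \left(\xi_{i1} \oplus \xi_{i2} \oplus \cdots \oplus \xi_{i n_i}\right),$$ where $\oplus$ denotes exclusive or. For $1 \le i < j \le m$ let $$B_{ij} = \{ (\xi_{i\mu}, \xi_{j\nu}) : 1 \le \mu \le n_i,\ 1 \le \nu \le n_j,\ L_{i\mu} = \overline{L_{j\nu}} \},$$ i.e. the pairs of indicators of positions in two distinct clauses carrying complementary literals, and define $$h = \bigwedge_{1 \le i < j \le m} \ \bigwedge_{(\xi,\zeta) \in B_{ij}} (\bar{\xi} \vee \bar{\zeta})$$ (an empty conjunction being $\mathit{true}$). Then $f$ is satisfiable (by some assignment of its original variables) if and only if $g \wedge h$ is satisfiable (by some assignment of the indicator variables $\xi_{i\mu}$).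
   Context: Literals $L$ and $\overline{L}$ denote a variable and its negation (in either order). The formula $g \wedge h$ is a formula solely in the indicator variables $\xi_{i\mu}$; the original variables of $f$ do not occur in it. A multi-argument exclusive or $\xi_{i1} \oplus \cdots \oplus \xi_{in_i}$ is true exactly when an odd number of its arguments are true. *)

(* Defs.v *)
From mathcomp Require Import all_boot.
Set Implicit Arguments. Unset Strict Implicit. Unset Printing Implicit Defensive.

(* A literal over variables of type V: (v, true) is v, (v, false) is the negation of v. *)
Definition literal (V : Type) := (V * bool)%type.

Definition lit_compl (V : Type) (l : literal V) : literal V := (l.1, ~~ l.2).

Definition lit_eval (V : Type) (a : V -> bool) (l : literal V) : bool :=
  if l.2 then a l.1 else ~~ a l.1.

(* CNF f = /\_{i<m} \/_{mu < n i} L i mu  (0-based indices). *)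
Definition cnf_eval (V : Type) (m : nat) (n : nat -> nat)
    (L : nat -> nat -> literal V) (a : V -> bool) : Prop :=
  forall i, i < m -> exists2 mu, mu < n i & lit_eval a (L i mu).

Definition cnf_satisfiable (V : Type) (m : nat) (n : nat -> nat)
    (L : nat -> nat -> literal V) : Prop :=
  exists a : V -> bool, cnf_eval m n L a.

Definition xor_row (xi : nat -> nat -> bool) (i k : nat) : bool :=
  \big[addb/false]_(mu < k) xi i mu.

Definition g_eval (m : nat) (n : nat -> nat) (xi : nat -> nat -> bool) : Prop :=
  forall i, i < m -> xor_row xi i (n i).

Definition h_eval (V : Type) (m : nat) (n : nat -> nat)
    (L : nat -> nat -> literal V) (xi : nat -> nat -> bool) : Prop :=
  forall i j mu nu, i < j -> j < m -> mu < n i -> nu < n j ->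
    L i mu = lit_compl (L j nu) -> ~~ xi i mu || ~~ xi j nu.

Definition gh_satisfiable (V : Type) (m : nat) (n : nat -> nat)
    (L : nat -> nat -> literal V) : Prop :=
  exists xi : nat -> nat -> bool, g_eval m n xi /\ h_eval m n L xi.

(* Main.v *)
From Stdlib Require Import ClassicalEpsilon.
Require Import Defs.
From mathcomp Require Import all_boot.

Lemma xor_ex (xi : nat -> nat -> bool) i k :
  xor_row xi i k -> exists2 mu, mu < k & xi i mu.
Proof.
elim: k => [|k IH]; rewrite /xor_row ?big_ord0 // big_ord_recr /=.
case H: (xi i k); first by move=> _; exists k.
rewrite addbF => /IH [mu Hmu Hx]; exists mu => //; exact: ltnW.
Qed.

Lemma xor_one (f k : nat) :
  \big[addb/false]_(mu < k) (nat_of_ord mu == f) = (f < k).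
Proof.
elim: k => [|k IH]; first by rewrite big_ord0.
rewrite big_ord_recr /= IH ltnS (leq_eqVlt f k) (eq_sym k f).
by case: (ltngtP f k) => H; rewrite ?addbF ?addbT.
Qed.

Definition pbool (P : Prop) : bool :=
  if excluded_middle_informative P then true else false.
Lemma pboolT (P : Prop) : P -> pbool P.
Proof. by rewrite /pbool; case: excluded_middle_informative. Qed.
Lemma pboolF (P : Prop) : ~ P -> pbool P = false.
Proof. by rewrite /pbool; case: excluded_middle_informative. Qed.
Lemma pboolE (P : Prop) : pbool P -> P.
Proof. by rewrite /pbool; case: excluded_middle_informative. Qed.

Theorem mainTheorem1 (V : Type) (m : nat) (n : nat -> nat)
    (L : nat -> nat -> literal V) :
  1 <= m -> (forall i, i < m -> 1 <= n i) ->
  cnf_satisfiable m n L <-> gh_satisfiable m n L.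
Proof.
move=> _ _; split.
- case=> a Ha.
  pose fst i := find (fun mu => lit_eval a (L i mu)) (iota 0 (n i)).
  exists (fun i mu => mu == fst i); split.
  + move=> i Hi; rewrite /xor_row xor_one /fst.
    have [mu Hmu Hl] := Ha i Hi.
    rewrite -[X in _ < X](size_iota 0) -has_find; apply/hasP.
    by exists mu; rewrite // mem_iota.
  + move=> i j mu nu Hij Hjm Hmu Hnu HL.
    rewrite -negb_and; apply/negP => /andP [/eqP E1 /eqP E2].
    have Ti : lit_eval a (L i mu).
      have Hi : i < m by apply: ltn_trans Hjm.
      have [k Hk Hl] := Ha i Hi.
      have Hs : has (fun mu => lit_eval a (L i mu)) (iota 0 (n i)).
        by apply/hasP; exists k; rewrite // mem_iota.
      by move: (nth_find 0 Hs); rewrite -/(fst i) -E1 nth_iota.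
    have Tj : lit_eval a (L j nu).
      have [k Hk Hl] := Ha j Hjm.
      have Hs : has (fun mu => lit_eval a (L j mu)) (iota 0 (n j)).
        by apply/hasP; exists k; rewrite // mem_iota.
      by move: (nth_find 0 Hs); rewrite -/(fst j) -E2 nth_iota.
    move: Ti Tj; rewrite HL /lit_eval /lit_compl /=.
    by case: (L j nu) => v [] /=; case: (a v).
- case=> xi [Hg Hh].
  pose P v := exists i mu, [/\ i < m, mu < n i, xi i mu & L i mu = (v, true)].
  pose a v : bool := pbool (P v).
  exists a => i Hi.
  have [mu Hmu Hx] := @xor_ex _ _ _ (Hg i Hi).
  case E: (L i mu) => [v b]; case: b E => E.
  + exists mu => //; rewrite E /lit_eval /= /a.
    by apply: pboolT; exists i, mu.
  + case Av: (a v); last first.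
      by exists mu => //; rewrite E /lit_eval /= Av.
    have [j [nu [Hj Hnu Hxj Ej]]] := pboolE (P v) Av.
    have Tnu : lit_eval a (L j nu) by rewrite Ej /lit_eval /= Av.
    case: (ltngtP i j) => Hij.
    * have := Hh i j mu nu Hij Hj Hmu Hnu; rewrite E Ej /lit_compl /= Hx Hxj.
      by move=> /(_ erefl).
    * have := Hh j i nu mu Hij Hi Hnu Hmu; rewrite E Ej /lit_compl /= Hx Hxj.
      by move=> /(_ erefl).
    * by subst j; exists nu.
Qed.
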